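(* Let $\Omega\subset\mathbb{R}^n$, $\mathcal J=\{1,\dots,n\}$, $k$ a kernel satisfying the standing assumptions in the context, $u\in H_k(\Omega)$, and let $(x_i,\ell_i)$, $e_m$, $P_m$ be produced by the $f$-greedy algorithm as in the context. With $a_i:=|\partial_{\ell_{i+1}}e_i(x_{i+1})|$ and $b_i:=P_i(x_{i+1},\ell_{i+1})$ (and $a_i/b_i:=0$ whenever $b_i=0$), for any $m\ge1$, \[ \left[\prod_{i=m+1}^{2m}\frac{a_i}{b_i}\right]^{1/m}\le m^{-1/2}\,\|e_{m+1}\|_{H_k(\Omega)}. \]
   Context: $k:\Omega\times\Omega\to\mathbb{R}$ is a symmetric positive definite kernel with RKHS $H_k(\Omega)$, $k\in C^2(\Omega\times\Omega)$, and for all $x\in\Omega$, $\ell\in\mathcal J$, $\partial^{(2)}_\ell k(\cdot,x)\in H_k(\Omega)$ (derivative in the second argument) with $\partial_\ell f(x)=\langle f,\partial^{(2)}_\ell k(\cdot,x)\rangle_{H_k(\Omega)}$ for all $f\in H_k(\Omega)$. For a selection $\{(x_i,\ell_i)\}_{i=1}^m\subset\Omega\times\mathcal J$, $V_m:=\operatorname{span}\{\partial^{(2)}_{\ell_i}k(\cdot,x_i)\}_{i=1}^m$ ($V_0=\{0\}$), $\Pi_m$ is the orthogonal projector onto $V_m$, $s_m:=\Pi_mu$, $e_m:=u-s_m$. The $f$-greedy algorithm starts at $m=0$ and for $m\ge0$ chooses $(x_{m+1},\ell_{m+1})\in\operatorname{argmax}_{x\in\Omega,\ell\in\mathcal J}|\partial_\ell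 e_m(x)|$. Power function: $P_m(x,\ell):=\|(I-\Pi_m)\partial^{(2)}_\ell k(\cdot,x)\|_{H_k(\Omega)}$. *)

(* Defs.v *)
From HB Require Import structures.
From mathcomp Require Import all_boot all_order all_algebra.
From mathcomp Require Import all_classical all_reals all_analysis.
Import Order.TTheory GRing.Theory Num.Theory numFieldNormedType.Exports.

Set Implicit Arguments.
Unset Strict Implicit.
Unset Printing Implicit Defensive.

Local Open Scope classical_set_scope.
Local Open Scope ring_scope.

Section KernelDefs.
Context {R : realType} {n : nat}.
Local Notation V := 'rV[R]_n.

Definition unitv (l : 'I_n) : V := delta_mx 0 l.

Definition pderiv (l : 'I_n) (f : V -> R) (x : V) : R := 'D_(unitv l) f x.

Definition C2_on {W : normedModType R} (U : set W) (f : W -> R) : Prop :=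
  forall p, U p -> forall v w : W,
    [/\ derivable f p v, derivable ('D_v f) p w, {for p, continuous f},
        {for p, continuous ('D_v f)} & {for p, continuous ('D_w ('D_v f))}].

Definition sym_kernel_on (Om : set V) (k : V -> V -> R) : Prop :=
  forall x y, Om x -> Om y -> k x y = k y x.

Definition pd_kernel_on (Om : set V) (k : V -> V -> R) : Prop :=
  forall (N : nat) (pts : 'I_N -> V) (c : 'I_N -> R),
    (forall i, Om (pts i)) -> injective pts -> (exists i, c i != 0) ->
    0 < \sum_(i < N) \sum_(j < N) c i * c j * k (pts i) (pts j).

(* functions on Om are represented as functions on R^n vanishing off Om *)
Definition restr (Om : set V) (f : V -> R) : V -> R :=
  fun y => if `[< Om y >] then f y else 0.

Definition ksec (Om : set V) (k : V -> V -> R) (x : V) : V -> R :=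
  restr Om (fun y => k y x).

Definition dksec (Om : set V) (k : V -> V -> R) (l : 'I_n) (x : V) : V -> R :=
  restr Om (fun y => pderiv l (k y) x).

Definition fsub (f g : V -> R) : V -> R := fun y => f y - g y.

Definition fnorm (ip : (V -> R) -> (V -> R) -> R) (f : V -> R) : R :=
  Num.sqrt (ip f f).

Record is_RKHS (Om : set V) (k : V -> V -> R) (Hs : set (V -> R))
    (ip : (V -> R) -> (V -> R) -> R) : Prop := {
  rkhs_supp : forall f, Hs f -> forall y, ~ Om y -> f y = 0;
  rkhs_zero : Hs (fun=> 0);
  rkhs_add : forall f g, Hs f -> Hs g -> Hs (fun y => f y + g y);
  rkhs_scale : forall (a : R) f, Hs f -> Hs (fun y => a * f y);
  rkhs_sym : forall f g, Hs f -> Hs g -> ip f g = ip g f;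
  rkhs_lin : forall (a : R) f g h, Hs f -> Hs g -> Hs h ->
      ip (fun y => a * f y + g y) h = a * ip f h + ip g h;
  rkhs_pos : forall f, Hs f -> 0 <= ip f f;
  rkhs_def : forall f, Hs f -> ip f f = 0 -> f = (fun=> 0);
  rkhs_complete : forall s : nat -> (V -> R), (forall p, Hs (s p)) ->
      (forall eps : R, 0 < eps -> exists N : nat, forall p q : nat,
          (N <= p)%N -> (N <= q)%N -> fnorm ip (fsub (s p) (s q)) < eps) ->
      exists g, Hs g /\ (forall eps : R, 0 < eps -> exists N : nat,
          forall p : nat, (N <= p)%N -> fnorm ip (fsub (s p) g) < eps);
  rkhs_ksec : forall x, Om x -> Hs (ksec Om k x);
  rkhs_reprod : forall f x, Hs f -> Om x -> f x = ip f (ksec Om k x)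
}.

Definition deriv_reproducing (Om : set V) (k : V -> V -> R) (Hs : set (V -> R))
    (ip : (V -> R) -> (V -> R) -> R) : Prop :=
  forall x l, Om x -> Hs (dksec Om k l x) /\
    forall f, Hs f -> pderiv l f x = ip f (dksec Om k l x).

(* V_m = span { d^{(2)}_{l_i} k(., x_i) : 1 <= i <= m } ; V_0 = {0} *)
Definition inVm (Om : set V) (k : V -> V -> R) (X : nat -> V) (L : nat -> 'I_n)
    (m : nat) (f : V -> R) : Prop :=
  exists c : nat -> R,
    f = fun y => \sum_(1 <= i < m.+1) c i * dksec Om k (L i) (X i) y.

Definition orth_projs (Om : set V) (k : V -> V -> R) (Hs : set (V -> R))
    (ip : (V -> R) -> (V -> R) -> R) (X : nat -> V) (L : nat -> 'I_n)
    (Pi : nat -> (V -> R) -> (V -> R)) : Prop :=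
  forall m f, Hs f -> inVm Om k X L m (Pi m f) /\
    forall g, inVm Om k X L m g -> ip (fsub f (Pi m f)) g = 0.

Definition err (Pi : nat -> (V -> R) -> (V -> R)) (u : V -> R) (m : nat) : V -> R :=
  fsub u (Pi m u).

Definition fgreedy (Om : set V) (Pi : nat -> (V -> R) -> (V -> R)) (u : V -> R)
    (X : nat -> V) (L : nat -> 'I_n) : Prop :=
  forall m : nat, Om (X m.+1) /\
    forall x l, Om x ->
      `|pderiv l (err Pi u m) x| <= `|pderiv (L m.+1) (err Pi u m) (X m.+1)|.

Definition powerf (Om : set V) (k : V -> V -> R) (ip : (V -> R) -> (V -> R) -> R)
    (Pi : nat -> (V -> R) -> (V -> R)) (m : nat) (x : V) (l : 'I_n) : R :=
  fnorm ip (fsub (dksec Om k l x) (Pi m (dksec Om k l x))).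

Definition quot0 (a b : R) : R := if b == 0 then 0 else a / b.

End KernelDefs.

(* Main.v *)
Require Import Defs.
From HB Require Import structures.
From mathcomp Require Import all_boot all_order all_algebra.
From mathcomp Require Import all_classical all_reals all_analysis.
From mathcomp Require Import ring lra.
Import Order.TTheory GRing.Theory Num.Theory numFieldNormedType.Exports.
Local Open Scope classical_set_scope.
Local Open Scope ring_scope.

Section Helpers.
Variables (R : realType) (n : nat) (Om : set 'rV[R]_n)
  (k : 'rV[R]_n -> 'rV[R]_n -> R)
  (Hs : set ('rV[R]_n -> R)) (ip : ('rV[R]_n -> R) -> ('rV[R]_n -> R) -> R).
Hypothesis HR : is_RKHS Om k Hs ip.

Lemma fsubE (f g : 'rV[R]_n -> R) : fsub f g = (fun y => (-1) * g y + f y).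
Proof. by apply/funext => y; rewrite /fsub mulN1r addrC. Qed.

Lemma Hs_sub {f g} : Hs f -> Hs g -> Hs (fsub f g).
Proof.
move=> Hf Hg; rewrite fsubE.
exact: (rkhs_add HR (rkhs_scale HR _ Hg) Hf).
Qed.

Lemma ip_sub {f g h} : Hs f -> Hs g -> Hs h -> ip (fsub f g) h = ip f h - ip g h.
Proof.
move=> Hf Hg Hh; rewrite fsubE (rkhs_lin HR) //.
by rewrite mulN1r addrC.
Qed.

Lemma ip_orth {h w} : Hs h -> Hs w -> 0 < ip w w ->
  (ip h w) ^+ 2 / ip w w <= ip h h.
Proof.
move=> Hh Hw Bp.
set t := ip h w / ip w w.
pose g := fun y => (- t) * w y + h y.
have Hg : Hs g by exact: (rkhs_add HR (rkhs_scale HR _ Hw) Hh).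
have h1 : ip g g = - t * ip w g + ip h g by rewrite {1}/g (rkhs_lin HR).
have h2 : ip w g = 0.
  rewrite (rkhs_sym HR Hw Hg) /g (rkhs_lin HR) // /t.
  by field; rewrite gt_eqF.
have h3 : ip h g = ip h h - t * ip h w.
  rewrite (rkhs_sym HR Hh Hg) /g (rkhs_lin HR) // (rkhs_sym HR Hw Hh); ring.
have := rkhs_pos HR Hg; rewrite h1 h2 h3 mulr0 add0r /t.
suff -> : ip h w ^+ 2 / ip w w = ip h w / ip w w * ip h w by lra.
by rewrite expr2 mulrAC.
Qed.

Variables (X : nat -> 'rV[R]_n) (L : nat -> 'I_n).
Hypothesis HX : forall i, Om (X i.+1).
Hypothesis HD : deriv_reproducing Om k Hs ip.

Lemma dk_Hs i : Hs (dksec Om k (L i.+1) (X i.+1)).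
Proof. exact: (HD (X i.+1) (L i.+1) (HX i)).1. Qed.

Lemma inVm_Hs {m f} : inVm Om k X L m f -> Hs f.
Proof.
case=> c ->; elim: m => [|m IH].
  have -> : (fun y => \sum_(1 <= i < 1) c i * dksec Om k (L i) (X i) y) = (fun=> 0).
    by apply/funext => y; rewrite big_geq.
  exact: rkhs_zero HR.
have -> : (fun y => \sum_(1 <= i < m.+2) c i * dksec Om k (L i) (X i) y) =
  (fun y => c m.+1 * dksec Om k (L m.+1) (X m.+1) y +
     \sum_(1 <= i < m.+1) c i * dksec Om k (L i) (X i) y).
  by apply/funext => y; rewrite big_nat_recr //= addrC.
exact: (rkhs_add HR (rkhs_scale HR _ (dk_Hs m)) IH).
Qed.

Lemma inVm_sub {m f g} : inVm Om k X L m f -> inVm Om k X L m g ->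
  inVm Om k X L m (fsub f g).
Proof.
case=> c -> [d ->]; exists (fun i => c i - d i); apply/funext => y.
rewrite /fsub -sumrB; apply: eq_bigr => i _; by rewrite mulrBl.
Qed.

Lemma inVm_S {m f} : inVm Om k X L m f -> inVm Om k X L m.+1 f.
Proof.
case=> c ->; exists (fun i => if i == m.+1 then 0 else c i); apply/funext => y.
rewrite [RHS]big_nat_recr //= eqxx mul0r addr0.
apply: eq_big_nat => i /andP[_ H]; by rewrite (ltn_eqF H).
Qed.

Lemma inVm_new m : inVm Om k X L m.+1 (dksec Om k (L m.+1) (X m.+1)).
Proof.
exists (fun i => if i == m.+1 then 1 else 0); apply/funext => y.
rewrite [RHS]big_nat_recr //= eqxx mul1r big_nat_cond big1 ?add0r // => i.
by case/andP=> /andP[_ H] _; rewrite (ltn_eqF H) mul0r.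
Qed.

Variables (Pi : nat -> ('rV[R]_n -> R) -> ('rV[R]_n -> R)) (u : 'rV[R]_n -> R).
Hypothesis HO : orth_projs Om k Hs ip X L Pi.
Hypothesis Hu : Hs u.

Lemma err_Hs i : Hs (err Pi u i).
Proof. exact: Hs_sub Hu (inVm_Hs (HO i u Hu).1). Qed.

Lemma err_orth {i g} : inVm Om k X L i g -> ip (err Pi u i) g = 0.
Proof. exact: (HO i u Hu).2. Qed.

Lemma step i :
  let q := quot0 `|pderiv (L i.+1) (err Pi u i) (X i.+1)|
                 (powerf Om k ip Pi i (X i.+1) (L i.+1)) in
  0 <= q /\ q ^+ 2 <= ip (err Pi u i) (err Pi u i) - ip (err Pi u i.+1) (err Pi u i.+1).
Proof.
move=> q.
set ei := err Pi u i; set ej := err Pi u i.+1.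
have Hei : Hs ei := err_Hs i.
have Hej : Hs ej := err_Hs i.+1.
pose D := fsub ei ej.
have HDs : Hs D by exact: Hs_sub.
have DV : inVm Om k X L i.+1 D.
  have -> : D = fsub (Pi i.+1 u) (Pi i u).
    by apply/funext => y; rewrite /D /ei /ej /err /fsub; ring.
  exact: inVm_sub (HO i.+1 u Hu).1 (inVm_S (HO i u Hu).1).
pose d := dksec Om k (L i.+1) (X i.+1).
have Hd : Hs d := dk_Hs i.
have HPd : Hs (Pi i d) := inVm_Hs (HO i d Hd).1.
pose w := fsub d (Pi i d).
have Hw : Hs w by exact: Hs_sub.
have wV : inVm Om k X L i.+1 w.
  exact: inVm_sub (inVm_new i) (inVm_S (HO i d Hd).1).
have o1 : ip ej D = 0 by exact: err_orth.
have o2 : ip ej w = 0 by exact: err_orth.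
have o3 : ip ei (Pi i d) = 0 by exact: err_orth (HO i d Hd).1.
have DD : ip D D = ip ei ei - ip ej ej.
  have e1 : ip D ej = 0 by rewrite (rkhs_sym HR HDs Hej).
  have e2 : ip D ej = ip ei ej - ip ej ej := ip_sub Hei Hej Hej.
  have e3 : ip D D = ip ei D - ip ej D := ip_sub Hei Hej HDs.
  have e4 : ip D ei = ip ei ei - ip ej ei := ip_sub Hei Hej Hei.
  have e5 := rkhs_sym HR Hei HDs.
  have e6 := rkhs_sym HR Hej Hei.
  lra.
have aE : pderiv (L i.+1) ei (X i.+1) = ip D w.
  rewrite ((HD (X i.+1) (L i.+1) (HX i)).2 _ Hei) -/d.
  have e1 : ip D w = ip ei w - ip ej w := ip_sub Hei Hej Hw.
  have e2 : ip w ei = ip d ei - ip (Pi i d) ei := ip_sub Hd HPd Hei.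
  have e3 := rkhs_sym HR Hei Hw.
  have e4 := rkhs_sym HR Hei HPd.
  have e5 := rkhs_sym HR Hei Hd.
  lra.
have DDge : 0 <= ip D D := rkhs_pos HR HDs.
rewrite -DD /q /quot0 aE /powerf -/d -/w /fnorm.
case: ifP => [_|/negbT bn0].
  by rewrite expr0n /= lexx.
have Bge : 0 <= ip w w := rkhs_pos HR Hw.
have Bgt : 0 < ip w w.
  rewrite lt_def Bge andbT; apply: contra bn0 => /eqP ->; by rewrite sqrtr0.
split; first by rewrite divr_ge0 ?sqrtr_ge0.
rewrite expr_div_n sqr_sqrtr // real_normK ?num_real //.
exact: ip_orth.
Qed.

End Helpers.

Lemma agm (R : realType) (E : nat -> R) m : (forall i, 0 <= E i) ->
  \prod_(i < m) E i <= ((\sum_(i < m) E i) / m%:R) ^+ m.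
Proof.
move=> E0.
have := leif_AGM (A := predT) (E := fun i : 'I_m => E i).
rewrite cardT size_enum_ord.
move=> H; apply: leif_le; apply: H => i _; exact: E0.
Qed.
Lemma reidx (R : realType) (F : nat -> R) m :
  \sum_(m.+1 <= i < m.*2.+1) F i = \sum_(i < m) F (i + m.+1)%N.
Proof.
rewrite -{1}[m.+1]add0n big_addn.
have -> : (m.*2.+1 - m.+1 = m)%N by rewrite subSS -addnn addnK.
by rewrite big_mkord.
Qed.
Lemma reidxp (R : realType) (F : nat -> R) m :
  \prod_(m.+1 <= i < m.*2.+1) F i = \prod_(i < m) F (i + m.+1)%N.
Proof.
rewrite -{1}[m.+1]add0n big_addn.
have -> : (m.*2.+1 - m.+1 = m)%N by rewrite subSS -addnn addnK.
by rewrite big_mkord.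
Qed.
Lemma tele (R : realType) (q N : nat -> R) :
  (forall i, q i ^+ 2 <= N i - N i.+1) ->
  forall a b, (a <= b)%N -> \sum_(a <= i < b) q i ^+ 2 <= N a - N b.
Proof.
move=> Hq a; elim=> [|b IH].
  by rewrite leqn0 => /eqP ->; rewrite big_geq // subrr.
rewrite leq_eqVlt => /orP[/eqP ->|H]; first by rewrite big_geq // subrr.
rewrite big_nat_recr //=; have := IH H; have := Hq b; lra.
Qed.
Lemma final (R : realType) (q N : nat -> R) m : (0 < m)%N -> (forall i, 0 <= q i) ->
  (forall i, q i ^+ 2 <= N i - N i.+1) -> (forall i, 0 <= N i) ->
  (\prod_(m.+1 <= i < m.*2.+1) q i) `^ m%:R^-1 <= m%:R `^ (- 2^-1) * Num.sqrt (N m.+1).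
Proof.
move=> m0 q0 Hq N0.
set P := \prod_(_ <= _ < _) _.
have P0 : 0 <= P by apply: prodr_ge0.
have S : \sum_(m.+1 <= i < m.*2.+1) q i ^+ 2 <= N m.+1.
  have hm : (m.+1 <= m.*2.+1)%N by rewrite ltnS -addnn leq_addr.
  have := tele _ _ _ Hq m.+1 m.*2.+1 hm.
  have := N0 m.*2.+1; lra.
have mpos : 0 < m%:R :> R by rewrite ltr0n.
have S0 : 0 <= \sum_(m.+1 <= i < m.*2.+1) q i ^+ 2 by apply: sumr_ge0 => i _; exact: sqr_ge0.
have AG : P ^+ 2 <= (N m.+1 / m%:R) ^+ m.
  rewrite /P reidxp -prodrXl.
  apply: le_trans (agm _ (fun i => q (i + m.+1)%N ^+ 2) m _) _; first by move=> i; exact: sqr_ge0.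
  rewrite (_ : \sum_(i < m) q (i + m.+1)%N ^+ 2 = \sum_(m.+1 <= i < m.*2.+1) q i ^+ 2); last by rewrite reidx.
  rewrite lerXn2r ?nnegrE ?divr_ge0 ?ler0n ?N0 //.
  by rewrite ler_pM2r ?invr_gt0.
have Nm0 : 0 <= N m.+1 / m%:R by rewrite divr_ge0 ?ler0n.
rewrite (_ : m%:R^-1 = 2%:R * (m%:R * 2)^-1); last by field; rewrite gt_eqF.
rewrite powRrM powR_mulrn //.
have r0 : 0 <= (m%:R * 2 : R)^-1 by rewrite invr_ge0 mulr_ge0 ?ler0n.
apply: le_trans (ge0_ler_powR r0 _ _ AG) _; rewrite ?nnegrE ?exprn_ge0 //.
rewrite -powR_mulrn // -powRrM.
rewrite (_ : m%:R * (m%:R * 2)^-1 = 2^-1); last by field; rewrite gt_eqF.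
rewrite powR12_sqrt // sqrtrM // sqrtrV ?ler0n // powRN powR12_sqrt ?ler0n //.
by rewrite mulrC.
Qed.

Theorem lemma3 (R : realType) (n : nat) (Om : set 'rV[R]_n)
  (k : 'rV[R]_n -> 'rV[R]_n -> R)
  (Hs : set ('rV[R]_n -> R)) (ip : ('rV[R]_n -> R) -> ('rV[R]_n -> R) -> R)
  (u : 'rV[R]_n -> R) (X : nat -> 'rV[R]_n) (L : nat -> 'I_n)
  (Pi : nat -> ('rV[R]_n -> R) -> ('rV[R]_n -> R)) :
  open Om ->
  sym_kernel_on Om k -> pd_kernel_on Om k ->
  C2_on (Om `*` Om) (fun p : 'rV[R]_n * 'rV[R]_n => k p.1 p.2) ->
  is_RKHS Om k Hs ip -> deriv_reproducing Om k Hs ip ->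
  Hs u ->
  orth_projs Om k Hs ip X L Pi ->
  fgreedy Om Pi u X L ->
  forall m : nat, (1 <= m)%N ->
    let a := fun i : nat => (`|pderiv (L i.+1) (err Pi u i) (X i.+1)| : R) in
    let b := fun i : nat => (powerf Om k ip Pi i (X i.+1) (L i.+1) : R) in
    (\prod_(m.+1 <= i < (m.*2).+1) quot0 (a i) (b i)) `^ (m%:R^-1)
      <= (m%:R) `^ (- 2^-1) * fnorm ip (err Pi u m.+1).
Proof.
move=> _ _ _ _ HR HD Hu HO HG m m1 /=.
have HX : forall i, Om (X i.+1) by move=> i; exact: (HG i).1.
pose q i := quot0 `|pderiv (L i.+1) (err Pi u i) (X i.+1)| (powerf Om k ip Pi i (X i.+1) (L i.+1)).
pose N i := ip (err Pi u i) (err Pi u i).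
have st i : 0 <= q i /\ q i ^+ 2 <= N i - N i.+1 .
  exact: (@step _ _ _ _ _ _ HR _ _ HX HD _ _ HO Hu i).
have Nge i : 0 <= N i.
  exact: (rkhs_pos HR (@err_Hs _ _ _ _ _ _ HR _ _ HX HD _ _ HO Hu i)).
exact: (final _ _ _ _ m1 (fun i => (st i).1) (fun i => (st i).2) Nge).
Qed.
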